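(* Let $0\le T_1\le T$, $T_1>0$, $p\ge 1$, and $\beta>0$. Let $y\in W^{1,1}(0,T)$ and let $\alpha$ be a function with $\alpha(t)\ge 0$ for $t\ge 0$ and $\alpha(t)\ge\beta$ for $t\ge T_1$. Suppose \[ y'(t)+\alpha(t)y(t)\le g(t),\qquad y(0)=y_0, \] where $g\in L^1(0,T_1)\cap L^p(T_1,T)$. Then \[ \sup_{0\le t\le T}y(t)\le |y_0|+(1+\beta^{-1})\big(\|g\|_{L^1(0,T_1)}+\|g\|_{L^p(T_1,T)}\big). \] *)

(* Defs.v *)
From HB Require Import structures.
From mathcomp Require Import all_boot all_order all_algebra.
From mathcomp Require Import all_classical all_reals all_analysis.
Set Implicit Arguments. Unset Strict Implicit. Unset Printing Implicit Defensive.
Import Order.TTheory GRing.Theory Num.Theory.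
Import numFieldNormedType.Exports.
Local Open Scope classical_set_scope.
Local Open Scope ring_scope.

(* [is_weak_deriv T y v]: v is the (weak) derivative of y on (0,T) and
   y belongs to W^{1,1}(0,T): v is Lebesgue integrable on [0,T] and
   y t = y 0 + \int_0^t v for every t in [0,T]
   (i.e. y is the absolutely continuous representative). *)
Definition is_weak_deriv (R : realType) (T : R) (y v : R -> R) : Prop :=
  (lebesgue_measure : set _ -> \bar R).-integrable `[0, T] (EFin \o v) /\
  forall t, 0 <= t <= T ->
    y t = y 0 + Rintegral lebesgue_measure `[0, t] v.

Definition L1norm (R : realType) (a b : R) (g : R -> R) : R :=
  Rintegral lebesgue_measure `[a, b] (fun x => `|g x|).

Definition Lpnorm (R : realType) (p a b : R) (g : R -> R) : R :=
  (Rintegral lebesgue_measure `[a, b] (fun x => `|g x| `^ p)) `^ p^-1.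

Definition in_Lp (R : realType) (p a b : R) (g : R -> R) : Prop :=
  measurable_fun `[a, b] g /\
  (\int[lebesgue_measure]_(x in `[a, b]) ((`|g x| `^ p)%:E) < +oo)%E.

(* Main.v *)
Require Import Defs.
From HB Require Import structures.
From mathcomp Require Import all_boot all_order all_algebra.
From mathcomp Require Import all_classical all_reals all_analysis.
From mathcomp Require Import measurable_realfun.
From mathcomp Require Import lra.
Import Order.TTheory GRing.Theory Num.Theory.
Import numFieldNormedType.Exports.
Local Open Scope classical_set_scope.
Local Open Scope ring_scope.
Local Notation mu := (@lebesgue_measure _).

Lemma ae_le_Rint (R : realType) (D : set R) (f h : R -> R) :
  measurable D ->
  (lebesgue_measure : set _ -> \bar R).-integrable D (EFin \o f) ->
  (lebesgue_measure : set _ -> \bar R).-integrable D (EFin \o h) ->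
  {ae (lebesgue_measure : set _ -> \bar R), forall x, D x -> f x <= h x} ->
  Rintegral lebesgue_measure D f <= Rintegral lebesgue_measure D h.
Proof.
move=> mD fi hi ae.
rewrite -subr_ge0 -RintegralB//.
have mw : measurable_fun D (fun x => h x - f x).
  apply: measurable_funB.
  - by apply/measurable_EFinP; exact: (measurable_int _ hi).
  - by apply/measurable_EFinP; exact: (measurable_int _ fi).
rewrite /Rintegral.
have -> : (\int[lebesgue_measure]_(x in D) (h x - f x)%:E =
  \int[lebesgue_measure]_(x in D) (Num.max (h x - f x) 0)%:E)%E.
  apply: ae_eq_integral => //.
  - exact/measurable_EFinP.
  - apply/measurable_EFinP; exact: (measurable_maxr mw (measurable_cst _)).
  - case: ae => N [mN N0 sub]; exists N; split => // x /= nx; apply: sub => /= H.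
    by apply: nx => Dx; congr EFin; rewrite max_l// subr_ge0 H.
by rewrite fine_ge0// integral_ge0// => x _; rewrite lee_fin le_max lexx orbT.
Qed.

Lemma ae_mono (R : realType) (P Q : R -> Prop) :
  {ae (lebesgue_measure : set _ -> \bar R), forall x, P x} ->
  (forall x, P x -> Q x) ->
  {ae (lebesgue_measure : set _ -> \bar R), forall x, Q x}.
Proof.
move=> [N [mN N0 sub]] PQ; exists N; split => // x /= nQ; apply: sub => /= Px.
by apply: nQ; apply: PQ.
Qed.

Lemma weak_diff (R : realType) (T : R) (y v : R -> R) s t :
  is_weak_deriv T y v -> 0 <= s -> s <= t -> t <= T ->
  y t - y s = Rintegral mu `]s, t] v.
Proof.
move=> [vi yv] s0 st tT.
rewrite (yv t); last by rewrite (le_trans s0 st).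
rewrite (yv s); last by rewrite s0 (le_trans st tT).
rewrite opprD addrACA subrr add0r.
rewrite -(@Rintegral_itvB _ v (BLeft 0) (BRight t) s) ?bnd_simp//.
apply: integrableS vi => //; apply: subset_itvl; rewrite bnd_simp//.
Qed.

Lemma Rint_subset (R : realType) (A B : set R) (f : R -> R) :
  measurable A -> measurable B -> A `<=` B ->
  mu.-integrable B (EFin \o f) -> (forall x, B x -> 0 <= f x) ->
  Rintegral mu A f <= Rintegral mu B f.
Proof.
move=> mA mB AB fi f0.
have fiA : mu.-integrable A (EFin \o f) by exact: integrableS fi.
rewrite /Rintegral fine_le//; try exact: integrable_fin_num.
apply: ge0_subset_integral => //.
exact: measurable_int fi.
Qed.

Lemma crossing (R : realType) (T : R) (y v : R -> R) a t K :
  is_weak_deriv T y v -> 0 <= a -> a <= t -> t <= T -> y a <= K -> K < y t ->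
  exists s, [/\ a <= s, s < t, y s <= K & forall r, s < r -> r <= t -> K < y r].
Proof.
move=> wd a0 at_ tT yaK Kyt.
have [vi yv] := wd.
pose S := [set r | a <= r <= t /\ y r <= K].
have Sa : S a by split => //; rewrite lexx at_.
have ubS : ubound S t by move=> r [/andP[_ ->]].
have hs : has_sup S by split; [exists a | exists t].
pose s := sup S.
have as_ : a <= s by exact: sup_upper_bound hs a Sa.
have st : s <= t by apply: ge_sup => //; exists a.
have ys : y s <= K.
  rewrite leNgt; apply/negP => Ks.
  have e0 : 0 < y s - K by rewrite subr_gt0.
  have vi' : mu.-integrable setT (EFin \o (v \_ `[0, T])).
    rewrite -restrict_EFin; apply/integrable_restrict => //=; rewrite setTI//.
  have [d [d0 H]] := integral_normr_continuous vi' e0.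
  have [r [/andP[ar rt] yrK] rs] := sup_adherent d0 hs.
  have r0 : 0 <= r by exact: le_trans ar.
  have rles : r <= s by exact: sup_upper_bound hs r (conj (introT andP (conj ar rt)) yrK).
  have sT : s <= T by exact: le_trans tT.
  have sub : `]r, s] `<=` `[0, T].
    by apply: subset_itv; rewrite bnd_simp.
  have vi2 : mu.-integrable `]r, s] (EFin \o v) by exact: integrableS vi.
  have : y s - y r < y s - K.
    rewrite (@weak_diff _ _ _ _ r s wd r0 rles sT).
    apply: (le_lt_trans (ler_norm _)).
    apply: (le_lt_trans (le_normr_Rintegral _ _)) => //.
    rewrite (_ : Rintegral _ _ _ = Rintegral mu `]r, s] (fun x => `|(v \_ `[0, T]) x|)); last first.
      apply: eq_Rintegral => x; rewrite inE => xrs.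
      by rewrite patchE ifT// inE; apply: sub.
    apply: H => //.
    have E := lebesgue_measure_itv `]r, s].
    change (mu `]r, s] < d%:E)%E; rewrite E /=; case: ifP => _; last by rewrite lte_fin.
    by rewrite -EFinD lte_fin ltrBlDr -ltrBlDl.
  by rewrite ltrD2l ltrN2 ltNge yrK.
exists s; split => //.
- rewrite lt_neqAle st andbT; apply/negP => /eqP est.
  by move: ys; rewrite est leNgt Kyt.
- move=> r sr rt; rewrite ltNge; apply/negP => yrK.
  have : r <= s.
    apply: sup_upper_bound => //; split => //.
    by rewrite rt (le_trans as_ (ltW sr)).
  by rewrite leNgt sr.
Qed.

Lemma young_like (R : realType) (c p x : R) : 0 < c -> 1 <= p ->
  `|x| <= c + c `^ (1 - p) * `|x| `^ p.
Proof.
move=> c0 p1.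
have h0 : 0 <= c `^ (1 - p) * `|x| `^ p by rewrite mulr_ge0// powR_ge0.
have [h|h] := leP `|x| c; first by apply: (le_trans h); rewrite lerDl.
suff hX : `|x| <= c `^ (1 - p) * `|x| `^ p.
  by apply: (le_trans hX); rewrite lerDr ltW.
have u0 : 0 < `|x| by exact: lt_trans h.
have -> : `|x| `^ p = `|x| * `|x| `^ (p - 1).
  rewrite [in LHS](_ : p = (p - 1) + 1); last by rewrite subrK.
  rewrite (@powRD _ `|x| (p - 1) 1); last by apply/implyP => _; rewrite (gt_eqF u0).
  by rewrite powRr1 ?ltW// mulrC.
have cu : c `^ (p - 1) <= `|x| `^ (p - 1).
  apply: ge0_ler_powR; rewrite ?subr_ge0// ?nnegrE ?ltW//.
have c1 : c `^ (1 - p) * c `^ (p - 1) = 1.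
  rewrite -powRD; last by apply/implyP => _; rewrite (gt_eqF c0).
  by rewrite addrA subrK subrr powRr0.
have H1 : 1 <= c `^ (1 - p) * `|x| `^ (p - 1).
  by rewrite -[X in X <= _]c1 ler_wpM2l// powR_ge0.
by rewrite mulrCA -[leLHS]mulr1 ler_pM2l.
Qed.

Lemma Lp_integrable (R : realType) (p a b : R) (g : R -> R) :
  in_Lp p a b g ->
  mu.-integrable `[a, b] (EFin \o (fun x => `|g x| `^ p)).
Proof.
move=> [gm gp]; apply/integrableP; split.
  apply/measurable_EFinP.
  apply: (measurableT_comp (measurable_powR p)).
  by apply: measurableT_comp => //; exact: normr_measurable.
apply: le_lt_trans gp; rewrite le_eqVlt; apply/orP; left; apply/eqP.
by apply: eq_integral => x _ /=; rewrite ger0_norm// powR_ge0.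
Qed.

Theorem lemma3p1 (R : realType) (T T1 p beta y0 : R) (y alpha g : R -> R) :
  0 <= T1 <= T -> 0 < T1 -> 1 <= p -> 0 < beta ->
  (exists v : R -> R, is_weak_deriv T y v /\
     {ae (lebesgue_measure : set _ -> \bar R), forall t, t \in `]0, T[ ->
        v t + alpha t * y t <= g t}) ->
  y 0 = y0 ->
  (forall t, 0 <= t -> 0 <= alpha t) ->
  (forall t, T1 <= t -> beta <= alpha t) ->
  (lebesgue_measure : set _ -> \bar R).-integrable `[0, T1] (EFin \o g) ->
  in_Lp p T1 T g ->
  forall t, 0 <= t <= T ->
    y t <= `|y0| + (1 + beta^-1) * (L1norm 0 T1 g + Lpnorm p T1 T g).
Proof.
move=> /andP[T10 T1T] T1pos p1 b0 [v [wd ae]] y0E a0 ab gi gLp t /andP[t0 tT].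
have [vi yv] := wd.
have gabs : mu.-integrable `[0, T1] (EFin \o (fun x => `|g x|)).
  exact: integrable_norm gi.
have L10 : 0 <= L1norm 0 T1 g by apply: Rintegral_ge0 => x _; exact: normr_ge0.
pose M := `|y0| + L1norm 0 T1 g.
have key : forall s t', 0 <= s -> s < t' -> t' <= T -> forall h : R -> R,
    mu.-integrable `]s, t'] (EFin \o h) ->
    (forall x, s < x < t' -> (x \in `]0, T[ -> v x + alpha x * y x <= g x) ->
       v x <= h x) ->
    y t' <= y s + Rintegral mu `]s, t'] h.
  move=> s t' s0 st tT' h hi H.
  rewrite -lerBlDl (@weak_diff _ _ _ _ s t' wd s0 (ltW st) tT').
  have sub1 : `]s, t'[ `<=` `[0, T] by apply: subset_itv; rewrite bnd_simp.
  have sub2 : `]s, t'[ `<=` `]s, t'] by apply: subset_itv; rewrite bnd_simp.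
  rewrite -(@Rintegral_itv_bndo_bndc _ (BRight s) t'); last exact: integrableS vi.
  rewrite -(@Rintegral_itv_bndo_bndc _ (BRight s) t'); last exact: integrableS hi.
  apply: ae_le_Rint => //.
  - exact: integrableS vi.
  - exact: integrableS hi.
  - case: ae => N [mN N0 subN]; exists N; split => // x /= nQ.
    apply: subN => /= Px; apply: nQ => xin; apply: H => //.
have st1 : forall t', 0 <= t' -> t' <= T1 -> y t' <= M.
  move=> t' t0' tT1.
  have tT' : t' <= T by exact: le_trans T1T.
  have [h|h] := leP (y t') `|y0|; first by rewrite (le_trans h)// lerDl.
  have y0K : y 0 <= `|y0| by rewrite y0E ler_norm.
  have [s [s0 st ysK post]] := @crossing R T y v 0 t' `|y0| wd (lexx 0) t0' tT'
    y0K h.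
  have sub : `]s, t'] `<=` `[0, T1] by apply: subset_itv; rewrite bnd_simp.
  have gi2 : mu.-integrable `]s, t'] (EFin \o (fun x => `|g x|)).
    exact: integrableS gabs.
  have Hc : forall x, s < x < t' ->
      (x \in `]0, T[ -> v x + alpha x * y x <= g x) -> v x <= `|g x|.
    move=> x /andP[sx xt] Hx.
    have x0 : 0 < x by exact: le_lt_trans sx.
    have xin : x \in `]0, T[ by rewrite in_itv /= x0 (lt_le_trans xt tT').
    have yx : `|y0| < y x by exact: post x sx (ltW xt).
    have A0 : 0 <= alpha x * y x.
      by rewrite mulr_ge0 ?a0 ?ltW// (le_lt_trans (normr_ge0 _) yx).
    have H1 := Hx xin; have H2 := ler_norm (g x).
    lra.
  apply: (le_trans (key s t' s0 st tT' _ gi2 Hc)).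
  rewrite /M /L1norm; apply: lerD => //.
  by apply: Rint_subset => // x _; exact: normr_ge0.
pose Ip := Rintegral mu `[T1, T] (fun x => `|g x| `^ p).
have gpi := @Lp_integrable R p T1 T g gLp.
have Ip0 : 0 <= Ip by apply: Rintegral_ge0 => x _; exact: powR_ge0.
have M0 : 0 <= M by rewrite addr_ge0.
have st2 : forall c, 0 < c -> T1 <= t -> y t <= M + c / beta + c `^ (1 - p) * Ip.
  move=> c c0 T1t.
  pose K := M + c / beta.
  have MK : M <= K by rewrite lerDl divr_ge0 ?ltW.
  have hIp : 0 <= c `^ (1 - p) * Ip by rewrite mulr_ge0 ?powR_ge0.
  have [h|h] := leP (y t) K; first by rewrite (le_trans h)// lerDl.
  have [s [T1s st ysK post]] := @crossing R T y v T1 t K wd (ltW T1pos) T1t tT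
    (le_trans (st1 T1 (ltW T1pos) (lexx _)) MK) h.
  have s0 : 0 <= s by exact: le_trans (ltW T1pos) T1s.
  have sub : `]s, t] `<=` `[T1, T] by apply: subset_itv; rewrite bnd_simp.
  have gpi2 : mu.-integrable `]s, t] (EFin \o (fun x => `|g x| `^ p)).
    exact: integrableS gpi.
  pose hh := fun x => c `^ (1 - p) * `|g x| `^ p.
  have hi : mu.-integrable `]s, t] (EFin \o hh).
    have HZ : mu.-integrable `]s, t] (fun x => (c `^ (1 - p))%:E * (EFin \o (fun x => (`|g x| `^ p)%R)) x)%E.
      by apply: integrableZl.
    move: HZ; apply: eq_integrable => // x _.
  have Hc : forall x, s < x < t ->
      (x \in `]0, T[ -> v x + alpha x * y x <= g x) -> v x <= hh x.
    move=> x /andP[sx xt] Hx.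
    have x0 : 0 < x by exact: le_lt_trans sx.
    have xin : x \in `]0, T[ by rewrite in_itv /= x0 (lt_le_trans xt tT).
    have yx : K < y x by exact: post x sx (ltW xt).
    have K0 : 0 <= K by exact: le_trans MK.
    have ypos : 0 < y x by exact: le_lt_trans yx.
    have A1 : beta * K <= alpha x * y x.
      apply: (le_trans (ler_wpM2l (ltW b0) (ltW yx))).
      by rewrite ler_pM2r// ab// (le_trans T1s (ltW sx)).
    have A2 : c <= beta * K.
      rewrite /K mulrDr mulrCA mulfV ?gt_eqF// mulr1 lerDr.
      exact: mulr_ge0 (ltW b0) M0.
    have H1 := Hx xin; have H2 := ler_norm (g x); have Y := @young_like R c p (g x) c0 p1.
    rewrite /hh; lra.

  apply: (le_trans (key s t s0 st tT hh hi Hc)).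
  rewrite /hh RintegralZl //; apply: lerD => //.
  rewrite ler_wpM2l ?powR_ge0//; apply: Rint_subset => // x _; exact: powR_ge0.
have G0 : 0 <= Lpnorm p T1 T g by exact: powR_ge0.
have bi0 : 0 <= beta^-1 by rewrite invr_ge0 ltW.
have bound : M <= `|y0| + (1 + beta^-1) * (L1norm 0 T1 g + Lpnorm p T1 T g).
  have := mulr_ge0 bi0 (addr_ge0 L10 G0).
  rewrite /M mulrDl mul1r; lra.
have [tT1|T1t] := leP t T1; first exact: le_trans (st1 t t0 tT1) bound.
have {}T1t := ltW T1t.
move: Ip0; rewrite le_eqVlt => /predU1P[Ipe|Ipp].
  apply: le_trans bound; apply/ler_addgt0Pr => e e0.
  have c0 : 0 < beta * e by rewrite mulr_gt0.
  have := st2 _ c0 T1t; rewrite -Ipe mulr0 addr0.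
  by have -> : beta * e / beta = e by rewrite mulrAC mulfV ?gt_eqF// mul1r.
have Gp : 0 < Lpnorm p T1 T g by exact: powR_gt0.
have p0 : p != 0 by rewrite gt_eqF// (lt_le_trans ltr01 p1).
have IpG : Ip = Lpnorm p T1 T g `^ p.
  by rewrite /Lpnorm -powRrM mulVf// powRr1// ltW.
have e : Lpnorm p T1 T g `^ (1 - p) * Ip = Lpnorm p T1 T g.
  rewrite [X in _ * X]IpG -powRD; last by apply/implyP => _; rewrite gt_eqF.
  by rewrite subrK powRr1// ltW.
have := st2 _ Gp T1t; rewrite e => H.
apply: (le_trans H).
have : 0 <= beta^-1 * L1norm 0 T1 g by rewrite mulr_ge0.
rewrite /M mulrDl mul1r mulrDr.
lra.
Qed.
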